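(* Let $F$ be an infinite field (e.g. $\mathbb{R}$ or $\mathbb{C}$), let $V$ be a vector space over $F$, and let $n \ge 1$. Every valid widget with $n$ pairs in $V$ contains a legal subwidget.
   Context: A widget with $n$ pairs in $V$ is an indexed family of $n$ pairs of vectors $p_i=(p_i^+,p_i^-)$, $i=1,\dots,n$, in $V$ (the vectors $p_i^+,p_i^-$ are called the points of the pair $p_i$; each is called the opposite of the other). A section of a widget is a set of points containing at most one point from each pair. A widget with $n$ pairs is legal if every section spans a linear subspace of $V$ of dimension at most $n-1$. A widget with $n$ pairs is full if the linear span of all its $2n$ points has dimension at least $n$. A widget is valid if it is both legal and full. A subwidget of a widget with $n$ pairs is the widget formed by some $k$ of its pairs with $1\le k<n$ (a proper subset of the pairs); it is itself a widget with $k$ pairs, so it is legal if every one of its sections spans a subspace of dimension at most $k-1$, and full if its $2k$ points span a subspace of dimension at least $k$. *)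

(* Defs.v *)
From HB Require Import structures.
From mathcomp Require Import all_boot all_order all_algebra.
Set Implicit Arguments. Unset Strict Implicit. Unset Printing Implicit Defensive.
Import GRing.Theory.
Local Open Scope ring_scope.

Definition infinite_field (F : fieldType) : Prop :=
  forall s : seq F, exists x : F, x \notin s.

Section Widgets.
Variables (F : fieldType) (V : lmodType F).

Definition in_span (s : seq V) (v : V) : Prop :=
  exists c : 'I_(size s) -> F, v = \sum_(i < size s) c i *: s`_i.

Definition lin_indep (t : seq V) : Prop :=
  forall c : 'I_(size t) -> F,
    \sum_(i < size t) c i *: t`_i = 0 -> forall i, c i = 0.

Definition span_dim_le (s : seq V) (d : nat) : Prop :=
  forall t : seq V, (forall v, v \in t -> in_span s v) -> lin_indep t ->
    (size t <= d)%N.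

Definition span_dim_ge (s : seq V) (d : nat) : Prop :=
  exists t : seq V, [/\ forall v, v \in t -> in_span s v, lin_indep t
                      & (d <= size t)%N].

Variable n : nat.

Definition widget := 'I_n -> V * V.

(* A section is given by choosing, for each pair i, either no point (None),
   p_i^+ (Some true) or p_i^- (Some false). *)
Definition section_pts (p : widget) (s : 'I_n -> option bool) : seq V :=
  pmap (fun i => omap (fun b : bool => if b then (p i).1 else (p i).2) (s i))
       (enum 'I_n).

Definition all_pts (p : widget) : seq V :=
  flatten [seq [:: (p i).1; (p i).2] | i <- enum 'I_n].

Definition legal_on (p : widget) (K : {set 'I_n}) : Prop :=
  forall s : 'I_n -> option bool, (forall i, i \notin K -> s i = None) ->
    span_dim_le (section_pts p s) (#|K| - 1).

Definition legal (p : widget) : Prop :=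
  forall s : 'I_n -> option bool, span_dim_le (section_pts p s) (n - 1).

Definition full (p : widget) : Prop := span_dim_ge (all_pts p) n.

Definition valid (p : widget) : Prop := legal p /\ full p.

Definition has_legal_subwidget (p : widget) : Prop :=
  exists K : {set 'I_n}, [/\ (0 < #|K|)%N, (#|K| < n)%N & legal_on p K].

End Widgets.

(* Main.v *)
Require Import Defs.
From mathcomp Require Import all_boot all_order all_algebra.
From Stdlib Require Import Classical.
From mathcomp Require Import zify.
Set Implicit Arguments. Unset Strict Implicit. Unset Printing Implicit Defensive.
Import GRing.Theory.
Local Open Scope ring_scope.

Section Core.
Variable F : fieldType.

Lemma rank_sup m1 m2 N (A : 'M[F]_(m1, N)) (B : 'M[F]_(m2, N)) :
  (A <= B)%MS -> (\rank B <= \rank A)%N -> (B <= A)%MS.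
Proof.
move=> sAB le; rewrite -(mxrank_leqif_sup sAB).2 eqn_leq le andbT.
exact: mxrankS.
Qed.

Lemma rank_add_row m N (U : 'M[F]_(m, N)) (y : 'rV[F]_N) :
  (\rank (U + <<y>>)%MS <= \rank U + 1)%N.
Proof.
apply: leq_trans (mxrank_adds_leqif _ _) _.
rewrite leq_add2l; move: (genmxE y) => e; rewrite e; exact: rank_leq_row.
Qed.

Lemma rank_sum_rows (I : finType) (A : pred I) N (g : I -> 'rV[F]_N) :
  (\rank (\sum_(i in A) <<g i>>)%MS <= #|A|)%N.
Proof.
rewrite -sum1_card; elim/big_rec2: _ => [|i B k _ IH]; first by rewrite mxrank0.
apply: leq_trans (mxrank_adds_leqif _ _) _.
rewrite leq_add //; move: (genmxE (g i)) => e; rewrite e; exact: rank_leq_row.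
Qed.

Variables (n N : nat) (x : 'I_n -> bool -> 'rV[F]_N).

Definition sp (K : {set 'I_n}) : 'M[F]_N :=
  (\sum_(i in K) (<<x i true>> + <<x i false>>))%MS.
Definition tr (K : {set 'I_n}) (f : 'I_n -> bool) : 'M[F]_N :=
  (\sum_(i in K) <<x i (f i)>>)%MS.

Lemma tr_sp (K : {set 'I_n}) f : (tr K f <= sp K)%MS.
Proof.
apply/sumsmx_subP => i iK; apply: (sumsmx_sup i) => //.
by case: (f i); [exact: addsmxSl | exact: addsmxSr].
Qed.

Lemma tr_sub (K S : {set 'I_n}) (f g : 'I_n -> bool) : K \subset S -> {in K, f =1 g} -> (tr K f <= tr S g)%MS.
Proof.
move=> /subsetP KS fg; apply/sumsmx_subP => i iK.
by apply: (sumsmx_sup i); [exact: KS | rewrite fg].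
Qed.

Lemma sp_sub (K S : {set 'I_n}) : K \subset S -> (sp K <= sp S)%MS.
Proof.
move=> /subsetP KS; apply/sumsmx_subP => i iK.
by apply: (sumsmx_sup i); [exact: KS|].
Qed.

Lemma core : forall m (S : {set 'I_n}) (U : 'M[F]_N), (#|S| <= m)%N ->
  (forall K : {set 'I_n}, K \subset S -> (\rank U + #|K| <= \rank (U + sp K)%MS)%N) ->
  exists f, (\rank U + #|S| <= \rank (U + tr S f)%MS)%N.
Proof.
elim=> [|m IH] S U hS H.
  exists (fun _ => true); move: hS; rewrite leqn0 => /eqP ->.
  by rewrite addn0 mxrankS // addsmxSl.
case: (boolP [exists K : {set 'I_n}, [&& K \proper S, K != set0 &
        (\rank (U + sp K)%MS <= \rank U + #|K|)%N]]).
  case/existsP => K /and3P [pKS nK0 tight].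
  have KS := proper_sub pKS.
  have [f1 hf1] : exists f, (\rank U + #|K| <= \rank (U + tr K f)%MS)%N.
    apply: IH => [|L LK]; last by apply: H; exact: subset_trans LK KS.
    by rewrite -ltnS (leq_trans (proper_card pKS)).
  set U' := (U + sp K)%MS.
  have eqU' : (U' <= U + tr K f1)%MS.
    apply: rank_sup; first by apply: addsmxS => //; exact: tr_sp.
    exact: leq_trans tight hf1.
  have rU' : \rank U' = (\rank U + #|K|)%N.
    apply/eqP; rewrite eqn_leq tight /=.
    apply: leq_trans hf1 (mxrankS _); apply: addsmxS => //; exact: tr_sp.
  have [f2 hf2] : exists f, (\rank U' + #|S :\: K| <= \rank (U' + tr (S :\: K) f)%MS)%N.
    apply: IH => [|L LS].
      rewrite -ltnS (leq_trans _ hS) // -(cardsID K S).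
      by rewrite -{1}(add0n #|S :\: K|) ltn_add2r (setIidPr KS) card_gt0.
    have LKd : [disjoint K & L].
      by rewrite -setI_eq0 -subset0; apply/subsetP => i /setIP [iK /(subsetP LS)] /setDP [_ /negP].
    have := H (K :|: L); rewrite subUset KS (subset_trans LS (subsetDl _ _)) => /(_ isT).
    rewrite cardsU (disjoint_setI0 LKd) cards0 subn0 addnA -rU' => h.
    apply: leq_trans h (mxrankS _).
    rewrite -addsmxA; apply: addsmxS => //; apply/sumsmx_subP => i /setUP [iK|iL].
      by apply: submx_trans (addsmxSl _ _); apply: (sumsmx_sup i).
    by apply: submx_trans (addsmxSr _ _); apply: (sumsmx_sup i).
  exists (fun i => if i \in K then f1 i else f2 i).
  rewrite -(cardsID K S) (setIidPr KS) addnA -rU'.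
  apply: leq_trans hf2 (mxrankS _); rewrite addsmx_sub; apply/andP; split.
    apply: submx_trans eqU' _; apply: addsmxS => //; apply: tr_sub => // i ->.
    done.
  apply: submx_trans (addsmxSr _ _); apply: tr_sub; first exact: subsetDl.
  by move=> i /setDP [_ /negbTE ->].
move=> noA.
case: (set_0Vmem S) => [S0|[j jS]].
  by exists (fun _ => true); rewrite S0 cards0 addn0 mxrankS // addsmxSl.
pose b := ~~ (x j true <= U)%MS.
have hb : (\rank U + 1 <= \rank (U + <<x j b>>)%MS)%N.
  rewrite addn1; apply/negPn/negP; rewrite -leqNgt => le.
  have := rank_sup (addsmxSl U <<x j b>>%MS) le.
  rewrite addsmx_sub submx_refl /= genmxE /b => sub.
  have := H [set j]; rewrite sub1set jS cards1 /sp big_set1 => /(_ isT) h.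
  suff hle : (\rank (U + (<<x j true>> + <<x j false>>)) <= \rank U)%N by lia.
  apply: mxrankS; rewrite addsmx_sub submx_refl /= addsmx_sub !genmxE.
  move: sub; case hc: (x j true <= U)%MS => /= sub; first by rewrite /= ?sub.
  by rewrite hc in sub.
set U' := (U + <<x j b>>)%MS.
have rU' : \rank U' = (\rank U + 1)%N.
  by apply/eqP; rewrite eqn_leq hb rank_add_row.
have [f2 hf2] : exists f, (\rank U' + #|S :\ j| <= \rank (U' + tr (S :\ j) f)%MS)%N.
  apply: IH => [|L LS].
    by move: hS; rewrite (cardsD1 j S) jS.
  case: (boolP (L == set0)) => [/eqP ->|nL0].
    by rewrite cards0 addn0 mxrankS // addsmxSl.
  have pLS : L \proper S.
    rewrite properEneq (subset_trans LS (subsetDl _ _)) andbT.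
    apply/negP => /eqP LeS; move: LS; rewrite LeS => /subsetP /(_ j jS).
    by rewrite setD11.
  have h1 := H L (proper_sub pLS).
  have h2 : (\rank U + #|L| < \rank (U + sp L)%MS)%N.
    rewrite ltn_neqAle h1 andbT; apply/negP => /eqP e.
    move/negP: noA; apply; apply/existsP; exists L.
    by rewrite pLS nL0 e leqnn.
  rewrite rU' addnAC addn1; apply: leq_trans h2 (mxrankS _).
  by apply: addsmxS => //; exact: addsmxSl.
exists (fun i => if i == j then b else f2 i).
rewrite (cardsD1 j S) jS addnA -rU'.
apply: leq_trans hf2 (mxrankS _); rewrite addsmx_sub; apply/andP; split.
  rewrite addsmx_sub addsmxSl /=; apply: submx_trans (addsmxSr _ _).
  by apply: (sumsmx_sup j) => //; rewrite eqxx.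
apply: submx_trans (addsmxSr _ _); apply: tr_sub; first exact: subsetDl.
by move=> i /setD1P [/negbTE -> _].
Qed.

End Core.

Section Bridge.
Variables (F : fieldType) (V : lmodType F) (N : nat) (w : 'I_N -> V).

Definition phi (c : 'rV[F]_N) : V := \sum_k c 0 k *: w k.

Lemma phiD u v : phi (u + v) = phi u + phi v.
Proof. by rewrite /phi -big_split; apply: eq_bigr => k _; rewrite mxE scalerDl. Qed.
Lemma phi0 : phi 0 = 0.
Proof. by rewrite /phi big1 // => k _; rewrite mxE scale0r. Qed.
Lemma phiZ a u : phi (a *: u) = a *: phi u.
Proof. by rewrite /phi scaler_sumr; apply: eq_bigr => k _; rewrite mxE scalerA. Qed.
Lemma phi_sum (I : Type) (r : seq I) (P : pred I) (G : I -> 'rV_N) :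
  phi (\sum_(i <- r | P i) G i) = \sum_(i <- r | P i) phi (G i).
Proof. exact: (big_morph phi phiD phi0). Qed.
Lemma phi_mul m (a : 'rV_m) (B : 'M_(m, N)) :
  phi (a *m B) = \sum_i a 0 i *: phi (row i B).
Proof. by rewrite mulmx_sum_row phi_sum; apply: eq_bigr => i _; rewrite phiZ. Qed.
Lemma phi_delta k : phi (delta_mx 0 k) = w k.
Proof.
rewrite /phi (bigD1 k) //= big1 ?addr0; first by rewrite mxE !eqxx scale1r.
by move=> j /negbTE jk; rewrite mxE jk andbF scale0r.
Qed.

Lemma kernel_ex : exists Z : 'M[F]_N, forall c, (c <= Z)%MS <-> phi c = 0.
Proof.
suff: forall d (A : 'M[F]_N), (forall v, (v <= A)%MS -> phi v = 0) ->
   (N - \rank A <= d)%N -> exists Z : 'M[F]_N, forall c, (c <= Z)%MS <-> phi c = 0.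
  move=> h; apply: (h N (0 : 'M[F]_N)); last exact: leq_subr.
  move=> v sv; have /eqP -> : v == 0 by rewrite -submx0.
  exact: phi0.
elim=> [|d IH] A hA hd.
  exists A => c; split; first exact: hA.
  move=> hc; apply/negPn/negP => nc.
  have: (\rank A < \rank (A + c)%MS)%N.
    rewrite ltnNge; apply/negP => le.
    by move: (rank_sup (addsmxSl A c) le); rewrite addsmx_sub (negbTE nc) andbF.
  have := rank_leq_col (A + c)%MS; move: hd; rewrite leqn0 subn_eq0; lia.
case: (classic (forall c, phi c = 0 -> (c <= A)%MS)) => [all|].
  by exists A => c; split; [exact: hA | exact: all].
move=> /not_all_ex_not [c hc].
have [pc nc] := imply_to_and _ _ hc.
move/negP: nc => nc.
apply: (IH (A + c)%MS).
  move=> v /sub_addsmxP [[u1 u2] /= ->]; rewrite phiD hA ?submxMl // add0r.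
  by rewrite [u2]mx11_scalar mul_scalar_mx phiZ pc scaler0.
have: (\rank A < \rank (A + c)%MS)%N.
  rewrite ltnNge; apply/negP => le.
  by move: (rank_sup (addsmxSl A c) le); rewrite addsmx_sub (negbTE nc) andbF.
lia.
Qed.

Lemma span_lift m (M : 'M[F]_(m, N)) (s : seq V) :
  (forall u, u \in s -> exists2 d, (d <= M)%MS & phi d = u) ->
  forall v, in_span s v -> exists2 c, (c <= M)%MS & phi c = v.
Proof.
move=> hs v [a ->].
have: forall i : 'I_(size s), exists d, (d <= M)%MS && (phi d == s`_i).
  move=> i; have [d dM pd] := hs _ (mem_nth 0 (ltn_ord i)).
  by exists d; rewrite dM pd eqxx.
case/fin_all_exists => d hd.
exists (\sum_i a i *: d i).
  by apply: summx_sub => i _; apply: scalemx_sub; case/andP: (hd i).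
rewrite phi_sum; apply: eq_bigr => i _; rewrite phiZ.
by case/andP: (hd i) => _ /eqP ->.
Qed.

Lemma indep_rank (Z : 'M[F]_N) (hZ : forall c, (c <= Z)%MS <-> phi c = 0)
   m (M : 'M[F]_(m, N)) (t : seq V) :
  (forall v, v \in t -> exists2 c, (c <= M)%MS & phi c = v) -> lin_indep t ->
  (\rank Z + size t <= \rank (Z + M)%MS)%N.
Proof.
move=> ht hi.
have: forall i : 'I_(size t), exists d, (d <= M)%MS && (phi d == t`_i).
  move=> i; have [d dM pd] := ht _ (mem_nth 0 (ltn_ord i)).
  by exists d; rewrite dM pd eqxx.
case/fin_all_exists => d hd.
pose C := \matrix_i d i.
have key : forall a : 'rV_(size t), (a *m C <= Z)%MS -> a = 0.
  move=> a /hZ; rewrite phi_mul => h0.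
  have := hi (fun i => a 0 i).
  have -> : \sum_i a 0 i *: t`_i = \sum_i a 0 i *: phi (row i C).
    by apply: eq_bigr => i _; rewrite rowK; case/andP: (hd i) => _ /eqP ->.
  move=> /(_ h0) h; apply/matrixP => i j; rewrite mxE (ord1 i); exact: h.
have rC : \rank C = size t.
  apply/eqP; apply: inj_row_free => v vC; apply: key; rewrite vC; exact: sub0mx.
have cap0 : \rank (Z :&: C)%MS = 0%N.
  apply/eqP; rewrite mxrank_eq0; apply/rowV0P => v; rewrite sub_capmx => /andP [vZ].
  by case/submxP => a va; move: vZ; rewrite va => /key ->; rewrite mul0mx.
have CM : (C <= M)%MS.
  by apply/row_subP => i; rewrite rowK; case/andP: (hd i).
have := mxrank_sum_cap Z C; rewrite cap0 addn0 rC => <-.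
by apply: mxrankS; apply: addsmxS.
Qed.

Lemma rank_indep (Z : 'M[F]_N) (hZ : forall c, (c <= Z)%MS <-> phi c = 0)
   (ys : seq 'rV[F]_N) :
  (\rank Z + size ys <= \rank (Z + \sum_(k < size ys) <<ys`_k>>)%MS)%N ->
  lin_indep (map phi ys).
Proof.
move=> hr; rewrite /lin_indep size_map => c hc j.
apply/eqP/negP => /negP cj.
pose v := \sum_(k < size ys) c k *: ys`_k.
have vZ : (v <= Z)%MS.
  apply/hZ; rewrite /v phi_sum; apply: etrans hc; apply: eq_bigr => k _.
  by rewrite phiZ (nth_map 0) // -phi0 -(nth_map 0 0) ?phi0.
pose R := (\sum_(k | k != j) <<ys`_k>>)%MS.
have yj : (ys`_j <= Z + R)%MS.
  have -> : ys`_j = (c j)^-1 *: (v + - \sum_(k | k != j) c k *: ys`_k).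
    by rewrite /v (bigD1 j) //= addrK scalerA mulVf // scale1r.
  apply: scalemx_sub; apply: addmx_sub_adds => //.
  rewrite (eqmx_opp _); apply: summx_sub => k kj; apply: scalemx_sub.
  by apply: (sumsmx_sup k) => //; rewrite genmxE.
have: (Z + \sum_(k < size ys) <<ys`_k>> <= Z + R)%MS.
  rewrite addsmx_sub addsmxSl /=; apply/sumsmx_subP => k _.
  case: (eqVneq k j) => [->|kj]; first by rewrite genmxE.
  by apply: submx_trans (addsmxSr _ _); apply: (sumsmx_sup k).
move/mxrankS => h.
have := leq_trans hr h.
have := leq_trans (mxrank_adds_leqif Z R) (leq_add (leqnn (\rank Z)) (rank_sum_rows (predC1 j) (fun k => ys`_k))).
rewrite cardC1 card_ord.
have : (0 < size ys)%N by apply: leq_ltn_trans (ltn_ord j).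
lia.
Qed.
End Bridge.

Lemma pmap_some (A B : Type) (h : A -> B) (r : seq A) :
  pmap (fun i => Some (h i)) r = map h r.
Proof. by elim: r => //= a r ->. Qed.

Lemma self_span (F : fieldType) (V : lmodType F) (t : seq V) :
  forall v, v \in t -> in_span t v.
Proof.
move=> v vt; have kt : (index v t < size t)%N by rewrite index_mem.
exists (fun i => if i == Ordinal kt then 1 else 0).
rewrite (bigD1 (Ordinal kt)) //= eqxx scale1r big1 ?addr0 ?nth_index //.
by move=> i /negbTE ->; rewrite scale0r.
Qed.

Theorem theorem1 (F : fieldType) (V : lmodType F) (n : nat)
  (hF : infinite_field F) (hn : (1 <= n)%N) (p : widget V n) :
  valid p -> has_legal_subwidget p.
Proof.
move=> [hleg hfull]; apply: NNPP => nsub.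
pose N := #|{: 'I_n * bool}|.
pose pt (i : 'I_n) (b : bool) := if b then (p i).1 else (p i).2.
pose w (k : 'I_N) := pt (@enum_val _ {: 'I_n * bool} k).1 (@enum_val _ {: 'I_n * bool} k).2.
pose x (i : 'I_n) (b : bool) : 'rV[F]_N := delta_mx 0 (enum_rank (i, b)).
have phix i b : phi w (x i b) = pt i b by rewrite phi_delta /w enum_rankK.
have [Z hZ] := kernel_ex w.
have xsp : forall (K : {set 'I_n}) i b, i \in K -> (x i b <= sp x K)%MS.
  move=> K i b iK; apply: (sumsmx_sup i) => //.
  by case: b; [apply: submx_trans (addsmxSl _ _) | apply: submx_trans (addsmxSr _ _)];
    rewrite genmxE.
have secin : forall (K : {set 'I_n}) s, (forall i, i \notin K -> s i = None) ->
    forall u, u \in section_pts p s -> exists2 d, (d <= sp x K)%MS & phi w d = u.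
  move=> K s hs u; rewrite mem_pmap => /mapP [i _].
  case hsi: (s i) => [b|] //= [->].
  have iK : i \in K by case: (boolP (i \in K)) => // /hs; rewrite hsi.
  by exists (x i b); [exact: xsp | rewrite phix].
have allin : forall u, u \in all_pts p -> exists2 d, (d <= sp x setT)%MS & phi w d = u.
  move=> u /flattenP [l /mapP [i _ ->]]; rewrite !inE => /orP [] /eqP ->.
    by exists (x i true); [exact: xsp | rewrite phix].
  by exists (x i false); [exact: xsp | rewrite phix].
have hyp : forall K : {set 'I_n}, K \subset setT ->
    (\rank Z + #|K| <= \rank (Z + sp x K)%MS)%N.
  move=> K _.
  case: (eqVneq K set0) => [->|K0].
    by rewrite cards0 addn0 mxrankS // addsmxSl.
  case: (eqVneq K setT) => [->|KT].
    case: hfull => t [ht hi ht2].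
    apply: leq_trans (indep_rank hZ _ hi); first by rewrite cardsT card_ord leq_add2l.
    by move=> v /ht; apply: span_lift.
  have nl : ~ legal_on p K.
    move=> hl; apply: nsub; exists K; split => //.
      by rewrite card_gt0.
    by move: (@proper_card _ K setT); rewrite cardsT card_ord properT; apply.
  have [s ns] := not_all_ex_not _ _ nl.
  have [hs ns2] := imply_to_and _ _ ns.
  have [t nt] := not_all_ex_not _ _ ns2.
  have [ht nt2] := imply_to_and _ _ nt.
  have [hi nt3] := imply_to_and _ _ nt2.
  move/negP: nt3; rewrite -ltnNge => lt.
  apply: leq_trans (indep_rank hZ _ hi).
    have : (0 < #|K|)%N by rewrite card_gt0.
    lia.
  by move=> v /ht; apply: span_lift; apply: secin.
have hS : (#|[set: 'I_n]| <= n)%N by rewrite cardsT card_ord.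
have [f hf] := core hS hyp.
pose ys := [seq x i (f i) | i <- enum 'I_n].
have sec : section_pts p (fun i => Some (f i)) = map (phi w) ys.
  rewrite /section_pts /= pmap_some /ys -map_comp; apply: eq_map => i /=.
  by rewrite phix.
have indep : lin_indep (section_pts p (fun i => Some (f i))).
  rewrite sec; apply: (@rank_indep _ _ _ w Z hZ ys).
  have -> : size ys = n by rewrite size_map size_enum_ord.
  rewrite cardsT card_ord in hf; apply: leq_trans hf (eq_leq _).
  congr (\rank (Z + _)%MS).
  rewrite /tr; apply: eq_big => [i|i _]; first by rewrite inE.
  by rewrite /ys (nth_map i) ?size_enum_ord // nth_ord_enum.
have := hleg (fun i => Some (f i)) _ (@self_span _ _ _) indep.
rewrite sec size_map size_map size_enum_ord; lia.
Qed.
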